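(* (a) For every $n\ge0$, the number of words $w\in\mathbb{P}^*$ with letter sum $n$ into which $121$ does not embed equals $\frac{n(n-1)}{2}+1$. (b) For every $n\ge1$, the number of words $w\in\mathcal{S}(121)$ with letter sum $3+n$ equals $\frac{n(n+1)(n+2)}{6}$.
   Context: $\mathbb{P}^*$ is the set of finite words over the positive integers. An embedding of $u$ into $w$ is a string of $|u|$ consecutive letters of $w$ whose $k$-th letter is $\ge$ the $k$-th letter of $u$ for every $k$. $\mathcal{S}(u)$ is the set of words $w$ admitting an embedding of $u$ such that the last $|u|$ letters of $w$ form the only embedding of $u$ into $w$. The letter sum of $w=w_1\ldots w_m$ is $\sum_k w_k$. *)

(* Defs.v *)
(* Words over positive integers are represented as
   sequences of naturals all of whose letters are positive. *)
From mathcomp Require Import all_boot.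
Set Implicit Arguments. Unset Strict Implicit. Unset Printing Implicit Defensive.

Definition pword (w : seq nat) : bool := all (fun x => 0 < x) w.

Definition letter_sum (w : seq nat) : nat := sumn w.

Definition embeds_at (u w : seq nat) (i : nat) : bool :=
  (i + size u <= size w) &&
  all (fun k => nth 0 u k <= nth 0 w (i + k)) (iota 0 (size u)).

Definition embeds (u w : seq nat) : bool :=
  has (embeds_at u w) (iota 0 (size w).+1).

Definition inS (u w : seq nat) : bool :=
  (size u <= size w) && embeds_at u w (size w - size u) &&
  all (fun i => (i == size w - size u) || ~~ embeds_at u w i)
      (iota 0 (size w).+1).

(* Main.v *)
Require Import Defs.
From mathcomp Require Import all_boot.
From Stdlib Require Import Lia.
Set Implicit Arguments. Unset Strict Implicit. Unset Printing Implicit Defensive.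

Definition inc (t : seq nat) := (head 0 t).+1 :: behead t.

Fixpoint ncomp k : nat -> seq (seq nat) :=
  match k with
  | 0 => fun m => if m is 0 then [:: [::]] else [::]
  | k'.+1 => fix cm m :=
      match m with
      | 0 => [seq 0 :: t | t <- ncomp k' 0]
      | m'.+1 => [seq 0 :: t | t <- ncomp k' m'.+1] ++ [seq inc t | t <- cm m']
      end
  end.

Lemma ncomp_mem k m t : (t \in ncomp k m) = (size t == k) && (sumn t == m).
Proof.
elim: k m t => [|k IHk] m t.
  by case: m => [|m]; case: t => [|x t] //=; rewrite ?inE //= andbF.
elim: m t => [|m IHm] t /=.
  apply/mapP/idP => [[t' ht' ->]|].
    by move: ht'; rewrite IHk /= eqSS => /andP[-> ->].
  case: t => [|x t] //=; rewrite eqSS => /andP[sz sm].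
  move: sm; rewrite addn_eq0 => /andP[/eqP -> sm].
  by exists t; rewrite // IHk sz sm.
rewrite -/(ncomp k.+1 m) mem_cat; apply/orP/idP => [[/mapP[t' ht' ->]|/mapP[t' ht' ->]]|].
- by move: ht'; rewrite IHk /= eqSS add0n.
- by move: ht'; rewrite IHm; case: t' => [|x t'] //=.
case: t => [|x t] //=; rewrite eqSS => /andP[sz sm].
case: x sm => [|x] sm.
  by left; apply/mapP; exists t; rewrite // IHk sz; rewrite add0n in sm.
right; apply/mapP; exists (x :: t); rewrite //.
by rewrite -/(ncomp k.+1 m) IHm /= eqSS sz; move: sm; rewrite addSn eqSS.
Qed.

Lemma ncomp_uniq k m : uniq (ncomp k m).
Proof.
elim: k m => [|k IHk] m; first by case: m.
elim: m => [|m IHm] /=.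
  by rewrite map_inj_uniq //; move=> x y [].
rewrite -/(ncomp k.+1 m) cat_uniq map_inj_uniq ?IHk; last by move=> x y [].
rewrite map_inj_in_uniq ?IHm ?andbT; last first.
  move=> x y; rewrite !ncomp_mem; case: x => [|x1 x]; case: y => [|y1 y] //=.
  by move=> _ _ [-> ->].
apply/hasPn => t /mapP[t' _ ->]; apply/negP => /mapP[t'' _] /=.
by case.
Qed.

Lemma ncomp_S0 k : ncomp k.+1 0 = [seq 0 :: t | t <- ncomp k 0].
Proof. by []. Qed.
Lemma ncomp_SS k m : ncomp k.+1 m.+1 = [seq 0 :: t | t <- ncomp k m.+1] ++ [seq inc t | t <- ncomp k.+1 m].
Proof. by []. Qed.

Lemma ncomp_size k m : size (ncomp k.+1 m) = 'C(m + k, k).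
Proof.
elim: k m => [|k IHk] m.
  elim: m => [|m IHm]; first by [].
  by rewrite ncomp_SS size_cat !size_map IHm /= !bin0.
elim: m => [|m IHm].
  by rewrite ncomp_S0 size_map IHk add0n !binn.
rewrite ncomp_SS size_cat !size_map IHm IHk.
by rewrite [in RHS]addSn binS addSn -addnS addnC.
Qed.

Lemma pword_nth w i : pword w -> i < size w -> 0 < nth 0 w i.
Proof. by move=> /(all_nthP 0) H /H. Qed.

Lemma ea121 w i : pword w ->
  embeds_at [:: 1; 2; 1] w i = (i + 3 <= size w) && (1 < nth 0 w i.+1).
Proof.
move=> pw; rewrite /embeds_at /=; case: (leqP (i + 3) (size w)) => h //=.
rewrite addn0 addn1 andbT (pword_nth pw) ?(pword_nth pw) ?andbT //.
- by apply: leq_trans h; rewrite [i + 3]addnS.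
- by apply: leq_trans h; rewrite -addn1 leq_add2l.
Qed.

Lemma nth_mid a j e i :
  nth 0 (a :: nseq j 1 ++ e) i.+1 = if i < j then 1 else nth 0 e (i - j).
Proof. by rewrite /= nth_cat size_nseq nth_nseq; case: (i < j). Qed.

Lemma size_le_sum w : pword w -> size w <= sumn w.
Proof.
elim: w => //= x w IH /andP[x0 pw]; rewrite -add1n leq_add //; exact: IH.
Qed.

Lemma mid_ones x mid e :
  pword (x :: mid ++ e) ->
  (forall k, k < size mid -> ~~ (1 < nth 0 (x :: mid ++ e) k.+1)) ->
  mid = nseq (size mid) 1.
Proof.
move=> pw H; apply: (@eq_from_nth _ 0); rewrite ?size_nseq // => k hk.
rewrite nth_nseq hk; have := H k hk; rewrite /= nth_cat hk.
have : 0 < nth 0 (x :: mid ++ e) k.+1.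
  by apply: pword_nth; rewrite //= size_cat ltnS ltn_addr.
rewrite /= nth_cat hk.
by case: (nth 0 mid k) => [|[|n]].
Qed.

Definition fa (t : seq nat) := if t is [:: a; j; b] then a.+1 :: nseq j 1 ++ [:: b.+1] else [::].
Definition fb (t : seq nat) := if t is [:: a; j; b; c] then a.+1 :: nseq j 1 ++ [:: b.+2; c.+1] else [::].

Lemma pword_mid a j e : pword (a.+1 :: nseq j 1 ++ e) = pword e.
Proof. by rewrite /pword /= all_cat all_nseq orbT. Qed.

Lemma sum_mid a j e : sumn (a.+1 :: nseq j 1 ++ e) = a.+1 + j + sumn e.
Proof. by rewrite /= sumn_cat sumn_nseq mul1n addnA. Qed.

Lemma fa_noemb a j b : ~~ embeds [:: 1; 2; 1] (a.+1 :: nseq j 1 ++ [:: b.+1]).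
Proof.
apply/hasPn => i _; rewrite ea121 ?pword_mid // nth_mid /= size_cat size_nseq.
case: (ltnP i j) => h; first by rewrite andbF.
by rewrite /= addn1 addn3 ltnS ltnS ltnNge (leq_trans h).
Qed.

Lemma fb_inS a j b c : inS [:: 1; 2; 1] (a.+1 :: nseq j 1 ++ [:: b.+2; c.+1]).
Proof.
have pw : pword (a.+1 :: nseq j 1 ++ [:: b.+2; c.+1]) by rewrite pword_mid.
set w := (a.+1 :: nseq j 1 ++ [:: b.+2; c.+1]) in pw *.
have sw : size w = j + 3 by rewrite /w /= size_cat size_nseq /= addn2 addn3.
have hb : nth 0 w j.+1 = b.+2 by rewrite /w nth_mid ltnn subnn.
rewrite /inS sw addnK leq_addl ea121 // sw leqnn hb.
apply/andP; split => //; apply/allP => i _; rewrite ea121 // sw.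
case: (ltngtP i j) => h //=.
  by rewrite nth_cat size_nseq h nth_nseq h andbF.
by rewrite leq_add2r leqNgt h.
Qed.

Lemma key_a w : pword w -> 1 < size w -> ~~ embeds [:: 1; 2; 1] w ->
  exists a j b, w = a.+1 :: nseq j 1 ++ [:: b.+1].
Proof.
case: w => [|x r] // pw.
case/lastP: r pw => [|mid y] // pw _ ne.
rewrite -cats1 in pw ne *.
have hx : 0 < x by apply: (pword_nth (i:=0) pw).
have hy : 0 < y.
  have := pword_nth (i:=(size mid).+1) pw.
  by rewrite /= nth_cat ltnn subnn size_cat addn1 ltnSn; apply.
have hm : mid = nseq (size mid) 1.
  apply: (mid_ones pw) => k hk.
  move/hasPn: ne => /(_ k); rewrite mem_iota leq0n add0n ea121 //.
  rewrite [size _]/= size_cat [size [:: y]]/= addn1 addn3 !ltnS hk /=.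
  by apply; rewrite ltnW // ltnW // ltnW.
exists x.-1, (size mid), y.-1.
by rewrite !prednK // {1}hm.
Qed.

Lemma key_b w : pword w -> inS [:: 1; 2; 1] w ->
  exists a j b c, w = a.+1 :: nseq j 1 ++ [:: b.+2; c.+1].
Proof.
case: w => [|x r] //.
case/lastP: r => [|r z] //.
case/lastP: r => [|mid y].
  by move=> _; rewrite /inS /=.
rewrite -!cats1 -catA => pw.
change (is_true (pword (x :: mid ++ [:: y; z]))) in pw.
have hy' : nth 0 (x :: mid ++ [:: y; z]) (size mid).+1 = y.
  by rewrite /= nth_cat ltnn subnn.
have sw : size (x :: mid ++ [:: y; z]) = size mid + 3.
  by rewrite /= size_cat /= addn2 addn3.
rewrite /inS sw addnK leq_addl ea121 // sw leqnn hy' andTb.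
case/andP=> hy /allP ne.
have hx : 0 < x by apply: (pword_nth (i:=0) pw).
have hz : 0 < z.
  have := pword_nth (i:=(size mid).+2) pw.
  rewrite /= nth_cat.
  have -> : ((size mid).+1 < size mid) = false by rewrite ltnNge leqnSn.
  by rewrite subSnn size_cat /= addn2; apply.
have hm : mid = nseq (size mid) 1.
  apply: (mid_ones pw) => k hk.
  have := ne k; change (mid ++ [:: y] ++ [:: z]) with (mid ++ [:: y; z]).
  rewrite mem_iota leq0n add0n andTb (ltn_eqF hk) orFb ea121 // sw.
  rewrite leq_add2r (ltnW hk) /= => -> //.
  by rewrite ltnS (leq_trans (ltnW hk)) ?leq_addr.
exists x.-1, (size mid), y.-2, z.-1.
change (mid ++ [:: y] ++ [:: z]) with (mid ++ [:: y; z]).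
rewrite !prednK //; first by rewrite -hm.
  by apply: ltnW.
by move: hy; case: (y) => [|[|]].
Qed.

Lemma mid_inj a j e a' j' e' : size e = size e' ->
  a.+1 :: nseq j 1 ++ e = a'.+1 :: nseq j' 1 ++ e' -> [/\ a = a', j = j' & e = e'].
Proof.
move=> se [-> H].
have hj : j = j'.
  by move/(f_equal size): H; rewrite !size_cat !size_nseq se => /addIn.
subst j'; move/eqP: H; rewrite eqseq_cat ?size_nseq // eqxx /= => /eqP ->.
by [].
Qed.

Lemma partA n : exists s : seq (seq nat),
     [/\ uniq s,
         (forall w, (w \in s) =
            [&& pword w, letter_sum w == n & ~~ embeds [:: 1; 2; 1] w])
       & size s = (n * (n - 1)) %/ 2 + 1].
Proof.
case: n => [|[|k]].
- exists [:: [::]]; split => // w; rewrite inE.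
  case: w => [|x w] //.
  apply/esym/negbTE/and3P => [[pw /eqP sm _]].
  by have := size_le_sum pw; rewrite /letter_sum in sm; rewrite sm.
- exists [:: [:: 1]]; split => // w; rewrite inE.
  case: w => [|x [|y w]] //.
    rewrite /pword /letter_sum /embeds /embeds_at /= addn0 andbT.
    by case: x => [|[|x]].
  have -> : ([:: x, y & w] == [:: 1]) = false by rewrite eqseq_cons andbC.
  apply/esym/negbTE/and3P => [[pw /eqP sm _]].
  by have := size_le_sum pw; rewrite /letter_sum in sm; rewrite sm.
exists ([:: k.+2] :: map fa (ncomp 3 k)); split.
- rewrite cons_uniq map_inj_in_uniq ?ncomp_uniq ?andbT.
    apply/mapP => [[t ht]]; move: ht; rewrite ncomp_mem.
    case: t => [|a [|j [|b [|]]]] //= _ [_] /(f_equal size).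
    by rewrite size_cat size_nseq addn1.
  move=> t t'; rewrite !ncomp_mem.
  case: t => [|a [|j [|b [|]]]] //; case: t' => [|a' [|j' [|b' [|]]]] //= _ _.
  by move/mid_inj => /(_ erefl) [-> -> [->]].
- move=> w; apply/idP/idP.
    rewrite inE => /orP[/eqP -> | /mapP[t ht ->]].
      by rewrite /pword /letter_sum /embeds /embeds_at /= addn0 eqxx.
    move: ht; rewrite ncomp_mem.
    case: t => [|a [|j [|b [|]]]] // /andP[_ /eqP sm].
    rewrite /fa pword_mid /letter_sum sum_mid fa_noemb /= andbT.
    by apply/eqP; rewrite -sm /= -!plusE; lia.
  case/and3P => pw /eqP sm ne; rewrite inE.
  case: w pw sm ne => [|x [|y r]] // pw sm ne.
    by rewrite /letter_sum /= addn0 in sm; rewrite sm eqxx.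
  have [a [j [b ew]]] := key_a pw isT ne.
  apply/orP; right; apply/mapP; exists [:: a; j; b]; last by rewrite ew.
  rewrite ncomp_mem /=; move: sm; rewrite ew /letter_sum sum_mid /=.
  by move=> h; apply/eqP; rewrite -!plusE in h *; lia.
transitivity (size (ncomp 3 k)).+1; first by rewrite -[in RHS](size_map fa).
rewrite ncomp_size bin2 addn1 divn2 subn1 addn2.
by [].
Qed.

Lemma partB n : 1 <= n -> exists s : seq (seq nat),
     [/\ uniq s,
         (forall w, (w \in s) =
            [&& pword w, letter_sum w == 3 + n & inS [:: 1; 2; 1] w])
       & size s = (n * (n + 1) * (n + 2)) %/ 6].
Proof.
case: n => [|k] // _.
exists (map fb (ncomp 4 k)); split.
- rewrite map_inj_in_uniq ?ncomp_uniq //.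
  move=> t t'; rewrite !ncomp_mem.
  case: t => [|a [|j [|b [|c [|]]]]] //; case: t' => [|a' [|j' [|b' [|c' [|]]]]] //= _ _.
  by move/mid_inj => /(_ erefl) [-> -> [-> ->]].
- move=> w; apply/mapP/idP => [[t ht ->]|].
    move: ht; rewrite ncomp_mem.
    case: t => [|a [|j [|b [|c [|]]]]] // /andP[_ /eqP sm].
    rewrite /fb pword_mid fb_inS /letter_sum sum_mid /= andbT.
    by apply/eqP; rewrite -sm /= -!plusE; lia.
  case/and3P => pw /eqP sm hs.
  have [a [j [b [c ew]]]] := key_b pw hs.
  exists [:: a; j; b; c]; last by rewrite ew.
  rewrite ncomp_mem /=; move: sm; rewrite ew /letter_sum sum_mid /=.
  by move=> h; apply/eqP; rewrite -!plusE in h *; lia.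
rewrite size_map ncomp_size.
have -> : k.+1 * (k.+1 + 1) * (k.+1 + 2) = 'C(k + 3, 3) * 3`!.
  rewrite bin_ffact !ffactnS ffactn0 addn3 addn1 addn2 /= muln1.
  by rewrite mulnC (mulnC k.+1).
by rewrite mulnK.
Qed.

Theorem mainTheorem13 :
  (forall n : nat, exists s : seq (seq nat),
     [/\ uniq s,
         (forall w, (w \in s) =
            [&& pword w, letter_sum w == n & ~~ embeds [:: 1; 2; 1] w])
       & size s = (n * (n - 1)) %/ 2 + 1]) /\
  (forall n : nat, 1 <= n -> exists s : seq (seq nat),
     [/\ uniq s,
         (forall w, (w \in s) =
            [&& pword w, letter_sum w == 3 + n & inS [:: 1; 2; 1] w])
       & size s = (n * (n + 1) * (n + 2)) %/ 6]).
Proof.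
split; [exact: partA | exact: partB].
Qed.
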